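(* Let $A=(A^\bullet,d)$ be a connected, finite-dimensional cdga over $\mathbb{C}$ which has trivial resonance in degree $i$, i.e. $0$ is an isolated point of $\mathcal{R}^i_1(A)$. Then for any finite-dimensional complex Lie algebra $\mathfrak{g}$ and any finite-dimensional representation $\theta\colon\mathfrak{g}\to\mathfrak{gl}(V)$ with $V\ne 0$, the sets $\Pi(A,\theta)$ and $\mathcal{R}^i_1(A,\theta)\cap\mathcal{F}^1(A,\mathfrak{g})$ have the same germ at $0$.
   Context: Connected means $A^0=\mathbb{C}\cdot1$. $\mathcal{F}(A,\mathfrak{g})=\{\omega\in A^1\otimes\mathfrak{g} : d\omega+\tfrac12[\omega,\omega]=0\}$ (for $\omega=\sum_k\eta_k\otimes g_k$: $\sum_k d\eta_k\otimes g_k+\sum_{k<l}\eta_k\eta_l\otimes[g_k,g_l]=0$). For $\omega\in\mathcal{F}(A,\mathfrak{g})$, $d_\omega(a\otimes v)=da\otimes v+\sum_k\eta_ka\otimes\theta(g_k)v$ on $A^\bullet\otimes V$, and $\mathcal{R}^i_r(A,\theta)=\{\omega\in\mathcal{F}(A,\mathfrak{g}):\dim H^i(A\otimes V,d_\omega)\ge r\}$. The rank one version ($\theta=\mathrm{id}_\mathbb{C}$) is denoted $\mathcal{R}^i_r(A)\subseteq\{\eta\in A^1:d\eta=0\}$. $\mathcal{F}^1(A,\mathfrak{g})=\{\eta\otimes g:\eta\in A^1,\ d\eta=0,\ g\in\mathfrak{g}\}$, and $\Pi(A,\theta)=\{\eta\otimes g:d\eta=0,\ \det\theta(g)=0\}$.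 *)

(* Defs.v *)
(* Complex numbers are modelled as R[i] for R : realType
   (mathcomp-real-closed's [complex R]); every realType is the field of real
   numbers, so R[i] is the field C. *)
From mathcomp Require Import all_boot all_algebra.
From mathcomp Require Import reals.
From mathcomp.real_closed Require Export complex.
Set Implicit Arguments.
Unset Strict Implicit.
Unset Printing Implicit Defensive.
Import GRing.Theory Num.Theory.
Local Open Scope ring_scope.

(* Finite-dimensional graded vector spaces are presented by a homogeneous   *)
(* basis: the total space is 'rV[C]_n and basis vector j has degree deg j.  *)
Definition homog (C : fieldType) (n : nat) (deg : 'I_n -> nat) (k : nat)
  (x : 'rV[C]_n) : Prop :=
  forall j : 'I_n, deg j <> k -> x 0 j = 0.

Record cdga (C : fieldType) := CDGA {
  cdim : nat;
  cdeg : 'I_cdim -> nat;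
  cmul : 'rV[C]_cdim -> 'rV[C]_cdim -> 'rV[C]_cdim;
  cone : 'rV[C]_cdim;
  cd   : 'rV[C]_cdim -> 'rV[C]_cdim;
  cmul_linl : forall (c : C) a b x, cmul (c *: a + b) x = c *: cmul a x + cmul b x;
  cmul_linr : forall (c : C) x a b, cmul x (c *: a + b) = c *: cmul x a + cmul x b;
  cmulA : forall a b x, cmul a (cmul b x) = cmul (cmul a b) x;
  cmul1l : forall a, cmul cone a = a;
  cmul1r : forall a, cmul a cone = a;
  cone_homog : homog cdeg 0 cone;
  cmul_homog : forall k l a b, homog cdeg k a -> homog cdeg l b ->
                 homog cdeg (k + l) (cmul a b);
  cmulC : forall k l a b, homog cdeg k a -> homog cdeg l b ->
                 cmul a b = (-1) ^+ (k * l) *: cmul b a;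
  cd_lin : forall (c : C) a b, cd (c *: a + b) = c *: cd a + cd b;
  cd_homog : forall k a, homog cdeg k a -> homog cdeg k.+1 (cd a);
  cdd : forall a, cd (cd a) = 0;
  cd_leibniz : forall k a b, homog cdeg k a ->
                 cd (cmul a b) = cmul (cd a) b + (-1) ^+ k *: cmul a (cd b)
}.

Arguments cdeg {C} c0 _ : rename.
Arguments cmul {C} c0 _ _ : rename.
Arguments cone {C} c0 : rename.
Arguments cd {C} c0 _ : rename.

Definition connected (C : fieldType) (A : cdga C) : Prop :=
  forall x, homog (cdeg A) 0 x -> exists c : C, x = c *: cone A.

Record lie_alg (C : fieldType) := LieAlg {
  ldim : nat;
  lbr : 'rV[C]_ldim -> 'rV[C]_ldim -> 'rV[C]_ldim;
  lbr_linl : forall (c : C) x y z, lbr (c *: x + y) z = c *: lbr x z + lbr y z;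
  lbr_linr : forall (c : C) z x y, lbr z (c *: x + y) = c *: lbr z x + lbr z y;
  lbr_alt : forall x, lbr x x = 0;
  lbr_jacobi : forall x y z,
      lbr x (lbr y z) + lbr y (lbr z x) + lbr z (lbr x y) = 0
}.

Arguments lbr {C} l _ _ : rename.

(* A finite-dimensional representation theta : g -> gl(V), V = C^p (column
   vectors), theta(x) acting by left multiplication. *)
Record lie_rep (C : fieldType) (g : lie_alg C) := LieRep {
  rdim : nat;
  rmap : 'rV[C]_(ldim g) -> 'M[C]_rdim;
  rmap_lin : forall (c : C) x y, rmap (c *: x + y) = c *: rmap x + rmap y;
  rmap_br : forall x y, rmap (lbr g x y) = rmap x *m rmap y - rmap y *m rmap x
}.

Arguments rmap {C g} l _.

Section Defs.
Variable C : fieldType.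
Variable A : cdga C.
Local Notation n := (cdim A).

Definition ebas (k : nat) (j : 'I_k) : 'rV[C]_k := delta_mx 0 j.

(* Elements of A (x) g are m x n matrices: eta (x) x  |->  x^T *m eta,
   so that omega = sum_k eta_k (x) e_k with eta_k = row k omega. *)
Definition tensAg (m : nat) (eta : 'rV[C]_n) (x : 'rV[C]_m) : 'M[C]_(m, n) :=
  x^T *m eta.

Definition in_A1g (m : nat) (W : 'M[C]_(m, n)) : Prop :=
  forall k : 'I_m, homog (cdeg A) 1 (row k W).

Definition flat (g : lie_alg C) (W : 'M[C]_(ldim g, n)) : Prop :=
  in_A1g W /\
  \sum_(k < ldim g) tensAg (cd A (row k W)) (ebas k)
  + \sum_(k < ldim g) \sum_(l < ldim g | (k < l)%N)
        tensAg (cmul A (row k W) (row l W)) (lbr g (ebas k) (ebas l)) = 0.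

(* Elements of A (x) V are p x n matrices: a (x) v |-> v *m a.  Given the
   matrices T k = theta(e_k) and omega = sum_k eta_k (x) e_k, the twisted
   differential d_omega(a (x) v) = da (x) v + sum_k eta_k a (x) theta(e_k) v,
   extended linearly. *)
Definition dtw (p m : nat) (T : 'I_m -> 'M[C]_p) (W : 'M[C]_(m, n))
  (X : 'M[C]_(p, n)) : 'M[C]_(p, n) :=
  \sum_(r < n) (col r X *m cd A (ebas r)
     + \sum_(k < m) (T k *m col r X) *m cmul A (row k W) (ebas r)).

Definition projdeg (p : nat) (i : nat) (X : 'M[C]_(p, n)) : 'M[C]_(p, n) :=
  \matrix_(a < p, r < n) (if cdeg A r == i then X a r else 0).

Definition Cdeg (p : nat) (i : nat) : {vspace 'M[C]_(p, n)} :=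
  limg (linfun (@projdeg p i)).

Definition Hdim (p m : nat) (T : 'I_m -> 'M[C]_p) (W : 'M[C]_(m, n))
  (i : nat) : nat :=
  let f := linfun (dtw T W) in
  (\dim (Cdeg p i :&: lker f)
   - \dim (if i is j.+1 then (f @: Cdeg p j)%VS else 0%VS))%N.

Definition theta_mats (g : lie_alg C) (th : lie_rep g) : 'I_(ldim g) -> 'M[C]_(rdim th) :=
  fun k => rmap th (ebas k).

Definition resonance (g : lie_alg C) (th : lie_rep g) (i r : nat)
  (W : 'M[C]_(ldim g, n)) : Prop :=
  flat W /\ (r <= Hdim (theta_mats th) W i)%N.

(* rank one: theta = id_C on g = C (basis e_0 = 1, theta(1) = 1);
   elements eta (x) 1 of A (x) C are identified with eta : 'rV_n = 'M_(1,n).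
   Flatness reduces to eta \in A^1, d eta = 0 (the bracket of C is 0). *)
Definition resonance1 (i r : nat) (eta : 'rV[C]_n) : Prop :=
  homog (cdeg A) 1 eta /\ cd A eta = 0 /\
  (r <= Hdim (fun _ : 'I_1 => (1%R : 'M[C]_1)) eta i)%N.

Definition F1 (g : lie_alg C) (W : 'M[C]_(ldim g, n)) : Prop :=
  exists (eta : 'rV[C]_n) (x : 'rV[C]_(ldim g)),
    homog (cdeg A) 1 eta /\ cd A eta = 0 /\ W = tensAg eta x.

Definition Pi (g : lie_alg C) (th : lie_rep g) (W : 'M[C]_(ldim g, n)) : Prop :=
  exists (eta : 'rV[C]_n) (x : 'rV[C]_(ldim g)),
    homog (cdeg A) 1 eta /\ cd A eta = 0 /\ \det (rmap th x) = 0 /\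
    W = tensAg eta x.

End Defs.

Arguments connected {C} A.
Arguments in_A1g {C} A {m} W.
Arguments flat {C} A {g} W.
Arguments dtw {C} A {p m} T W X.
Arguments Hdim {C} A {p m} T W i.
Arguments resonance {C} A {g} th i r W.
Arguments resonance1 {C} A i r eta.
Arguments F1 {C} A {g} W.
Arguments Pi {C} A {g} th W.

(* Main.v *)
From HB Require Import structures.
Require Import Defs.
From mathcomp Require Import all_boot all_order all_algebra.
From mathcomp Require Import reals.
From mathcomp.real_closed Require Import complex.
From Stdlib Require Import Classical.
Set Implicit Arguments.
Unset Strict Implicit.
Unset Printing Implicit Defensive.
Import Order.TTheory GRing.Theory Num.Theory.
Local Open Scope ring_scope.


Section Abs.
Variable F : fieldType.
Variable n : nat.
Variables D E P Q : 'M[F]_n.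
Hypothesis DD : D *m D = 0.
Hypothesis EE : E *m E = 0.
Hypothesis ED : E *m D = - (D *m E).
Hypothesis QDP : Q *m D *m P = Q *m D.
Hypothesis QEP : Q *m E *m P = Q *m E.

Definition Lop p (M : 'M[F]_p) (X : 'M[F]_(p, n)) := X *m D + M *m X *m E.

Definition exactp p (M : 'M[F]_p) := forall X : 'M[F]_(p, n),
  X *m P = X -> Lop M X = 0 -> exists Y, Y *m Q = Y /\ X = Lop M Y.

Lemma LopB p (M : 'M[F]_p) X Y : Lop M (X - Y) = Lop M X - Lop M Y.
Proof.
rewrite /Lop !mulmxBl !mulmxBr !mulmxBl.
by rewrite opprD !addrA; congr (_ + _); rewrite -!addrA; congr (_ + _); rewrite addrC.
Qed.

Lemma LopD p (M : 'M[F]_p) X Y : Lop M (X + Y) = Lop M X + Lop M Y.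
Proof.
rewrite /Lop !mulmxDl !mulmxDr !mulmxDl.
by rewrite !addrA; congr (_ + _); rewrite -!addrA; congr (_ + _); rewrite addrC.
Qed.

Lemma LL p (M : 'M[F]_p) X : Lop M (Lop M X) = 0.
Proof.
rewrite /Lop !mulmxDl !mulmxDr !mulmxDl -!mulmxA DD EE ED !mulmx0 add0r addr0 !mulmxN addNr.
by [].
Qed.

Lemma QD_P (Y : 'M[F]_(1, n)) : Y *m Q = Y -> Y *m D *m P = Y *m D.
Proof. by move=> h; rewrite -h -!mulmxA (mulmxA Q) QDP. Qed.

Lemma exact_conj p (M U : 'M[F]_p) : U \in unitmx ->
  exactp (U *m M *m invmx U) -> exactp M.
Proof.
move=> Uu ex X XP LX.
have h1 : (U *m X) *m P = U *m X by rewrite -mulmxA XP.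
have key : forall Z, Lop (U *m M *m invmx U) (U *m Z) = U *m Lop M Z.
  move=> Z; rewrite /Lop mulmxDr !mulmxA mulmxKV //.
have h2 : Lop (U *m M *m invmx U) (U *m X) = 0 by rewrite key LX mulmx0.
have [Y [YQ eY]] := ex _ h1 h2.
exists (invmx U *m Y); split; first by rewrite -mulmxA YQ.
have e2 : U *m X = U *m Lop M (invmx U *m Y) by rewrite -key mulKVmx.
by rewrite -(mulKmx Uu X) e2 mulKmx.
Qed.

Lemma exact_trig p (N : 'M[F]_p) : is_trig_mx N ->
  (forall mu, \det (N - mu%:M) = 0 -> exactp (mu%:M : 'M[F]_1)) -> exactp N.
Proof.
move=> Ntrig; elim/trigsqmx_ind: p N / Ntrig.
  move=> _ X _ _; exists 0; split; first by rewrite mul0mx.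
  by rewrite [X]flatmx0 [Lop _ _]flatmx0.
move=> p x c A Atrig IH hev.
have hA : forall mu, \det (A - mu%:M) = 0 -> exactp (mu%:M : 'M[F]_1).
  move=> mu hmu; apply: hev.
  rewrite (scalar_mx_block 1 p) opp_block_mx add_block_mx oppr0 addr0.
  by rewrite det_lblock hmu mulr0.
have hx : exactp x.
  rewrite [x]mx11_scalar; apply: hev.
  rewrite (scalar_mx_block 1 p) opp_block_mx add_block_mx oppr0 addr0.
  by rewrite det_lblock [x in x - _]mx11_scalar subrr det0 mul0r.
have exA := IH hA.
move=> X XP LX.
rewrite -[X]vsubmxK in XP LX *.
set x1 := usubmx X in XP LX *; set X' := dsubmx X in XP LX *.
have Lblock : forall (y : 'M[F]_(1, n)) (Y : 'M[F]_(p, n)),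
  Lop (block_mx x 0 c A) (col_mx y Y) = col_mx (Lop x y) (Lop A Y + c *m y *m E).
  move=> y Y; rewrite /Lop mul_col_mx mul_block_col !mul0mx addr0 mul_col_mx.
  rewrite add_col_mx; congr col_mx; rewrite mulmxDl.
  by rewrite [c *m y *m E + _]addrC addrA.
move: XP; rewrite mul_col_mx => /eq_col_mx [x1P X'P].
move: LX; rewrite Lblock -col_mx0 => /eq_col_mx [Lx1 LX'].
have [y1 [y1Q ey1]] := hx _ x1P Lx1.
pose Z := X' - c *m y1 *m E.
have QEP' : forall k (W : 'M[F]_(k, n)), W *m Q *m E *m P = W *m Q *m E.
  by move=> k W; rewrite -!mulmxA (mulmxA Q) QEP mulmxA.
have ZP : Z *m P = Z.
  by rewrite /Z mulmxBl X'P -y1Q !mulmxA QEP'.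
have LZ : Lop A Z = 0.
  have e1 : Lop A X' = - (c *m x1 *m E).
    by apply/eqP; rewrite -subr_eq0 opprK LX'.
  rewrite /Z LopB e1 ey1 /Lop mulmxDr mulmxDl -!mulmxA EE ED !mulmx0 !addr0.
  by rewrite !mulmxN opprK addNr.
have [Y' [Y'Q eY']] := exA _ ZP LZ.
exists (col_mx y1 Y'); split; first by rewrite mul_col_mx y1Q Y'Q.
by rewrite Lblock -eY' -ey1 /Z subrK.
Qed.

End Abs.


Section Link.
Variable F : fieldType.
Variable A : cdga F.
Local Notation n := (cdim A).

Definition Pdeg (k : nat) : 'M[F]_n := diag_mx (\row_j ((cdeg A j == k)%:R)).
Definition Qdeg (i : nat) : 'M[F]_n := diag_mx (\row_j (((cdeg A j).+1 == i)%:R)).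

Lemma projdegE p i (X : 'M[F]_(p, n)) : @projdeg F A p i X = X *m Pdeg i.
Proof.
apply/matrixP => a r; rewrite /projdeg /Pdeg mul_mx_diag !mxE.
by case: (cdeg A r == i); rewrite ?mulr1 ?mulr0.
Qed.

Lemma projdeg_lin p i : linear (@projdeg F A p i).
Proof. by move=> c X Y; rewrite !projdegE mulmxDl scalemxAl. Qed.

Definition projL p i : {linear 'M[F]_(p, n) -> 'M[F]_(p, n)} :=
  HB.pack (@projdeg F A p i) (GRing.isLinear.Build _ _ _ _ _ (@projdeg_lin p i)).

Lemma PdegK i : Pdeg i *m Pdeg i = Pdeg i.
Proof.
apply/matrixP => a r; rewrite /Pdeg mul_mx_diag !mxE.
case: (a =P r) => [ar|nar]; [rewrite ar mulr1n; by case: (cdeg A r == i); rewrite ?mulr1 ?mulr0 | by rewrite !mulr0n mul0r].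
Qed.

Lemma memCdeg p i (X : 'M[F]_(p, n)) : (X \in Cdeg A p i) = (X *m Pdeg i == X).
Proof.
rewrite /Cdeg; apply/idP/eqP.
  case/memv_imgP => Y _ ->.
  have -> : linfun (@projdeg F A p i) Y = projL p i Y by rewrite (lfunE (projL p i)).
  by rewrite /= !projdegE -mulmxA PdegK.
move=> h; have -> : X = linfun (@projdeg F A p i) X.
  by rewrite (lfunE (projL p i)) /= projdegE h.
exact: memv_img (memvf X).
Qed.

Lemma QdegS j : Qdeg j.+1 = Pdeg j.
Proof. by apply/matrixP => a r; rewrite /Qdeg /Pdeg !mxE eqSS. Qed.

Lemma Qdeg0 : Qdeg 0 = 0.
Proof.
apply/matrixP => a r; rewrite /Qdeg !mxE.
by case: (a == r); rewrite /= ?mulr0n ?mulr1n ?mxE.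
Qed.

Section Gen.
Variables (p m : nat) (T : 'I_m -> 'M[F]_p) (W : 'M[F]_(m, n)) (i : nat).
Variables (D E : 'M[F]_n) (M : 'M[F]_p).
Hypothesis hL : forall X, dtw A T W X = Lop D E M X.
Hypothesis DD : D *m D = 0.
Hypothesis EE : E *m E = 0.
Hypothesis ED : E *m D = - (D *m E).
Hypothesis QDP : Qdeg i *m D *m Pdeg i = Qdeg i *m D.
Hypothesis QEP : Qdeg i *m E *m Pdeg i = Qdeg i *m E.

Lemma dtw_lin : linear (dtw A T W).
Proof.
move=> c X Y; rewrite !hL /Lop mulmxDl mulmxDr mulmxDl -!scalemxAl -!scalemxAr.
rewrite -!scalemxAl scalerDr !addrA; congr (_ + _).
by rewrite -!addrA; congr (_ + _); rewrite addrC.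
Qed.

Definition dtwL : {linear 'M[F]_(p, n) -> 'M[F]_(p, n)} :=
  HB.pack (dtw A T W) (GRing.isLinear.Build _ _ _ _ _ dtw_lin).

Let f := linfun (dtw A T W).
Lemma fE X : f X = Lop D E M X.
Proof. by rewrite /f (lfunE dtwL) /= hL. Qed.

Let K := (Cdeg A p i :&: lker f)%VS.
Let I := (if i is j.+1 then (f @: Cdeg A p j)%VS else 0%VS).

Lemma memK X : (X \in K) = (X *m Pdeg i == X) && (Lop D E M X == 0).
Proof. by rewrite /K memv_cap memCdeg memv_ker fE. Qed.

Lemma memI X : reflect (exists Y, Y *m Qdeg i = Y /\ X = Lop D E M Y) (X \in I).
Proof.
rewrite /I; case: i => [|j].
  rewrite memv0; apply: (iffP eqP) => [-> | [Y [YQ ->]]].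
    by exists 0; rewrite mul0mx /Lop !mul0mx mulmx0 mul0mx addr0.
  by move: YQ; rewrite Qdeg0 mulmx0 => <-; rewrite /Lop !mul0mx mulmx0 mul0mx addr0.
apply: (iffP memv_imgP) => [[Y]|[Y [YQ ->]]].
  by rewrite memCdeg fE QdegS => /eqP YP ->; exists Y.
by exists Y; rewrite ?fE // memCdeg -QdegS YQ.
Qed.

Lemma IK : (I <= K)%VS.
Proof.
apply/subvP => X /memI [Y [YQ ->]]; rewrite memK LL // eqxx andbT.
apply/eqP; rewrite /Lop mulmxDl -YQ -!mulmxA (mulmxA (Qdeg i) D) QDP.
by rewrite (mulmxA (Qdeg i) E) QEP !mulmxA.
Qed.

Lemma Hdim_eq0 : exactp D E (Pdeg i) (Qdeg i) M -> Hdim A T W i = 0%N.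
Proof.
move=> ex; rewrite /Hdim -/f -/K -/I; apply/eqP; rewrite subn_eq0 dimvS //.
apply/subvP => X; rewrite memK => /andP [/eqP XP /eqP LX].
by apply/memI; apply: ex.
Qed.

Lemma Hdim_exact : Hdim A T W i = 0%N -> exactp D E (Pdeg i) (Qdeg i) M.
Proof.
rewrite /Hdim -/f -/K -/I => /eqP; rewrite subn_eq0 => hd.
have eKI : K = I.
  by apply/eqP; rewrite eq_sym eqEdim IK hd.
move=> X XP LX; apply/memI; rewrite -eKI memK XP LX !eqxx //.
Qed.

Lemma Hdim_pos X : X *m Pdeg i = X -> Lop D E M X = 0 ->
  ~ (exists Y, Y *m Qdeg i = Y /\ X = Lop D E M Y) -> (0 < Hdim A T W i)%N.
Proof.
move=> XP LX nI; rewrite /Hdim -/f -/K -/I subn_gt0.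
have [le _] := dimv_leqif_sup IK.
rewrite ltn_neqAle le andbT.
apply/negP => /eqP h.
have : (K <= I)%VS by rewrite -(dimv_leqif_sup IK) h.
move/subvP/(_ X); rewrite memK XP LX !eqxx => /(_ isT) /memI; exact: nI.
Qed.

End Gen.
End Link.


Lemma mul_sum_colrow (F : fieldType) m k l (X : 'M[F]_(m, k)) (Y : 'M[F]_(k, l)) :
  X *m Y = \sum_(r < k) col r X *m row r Y.
Proof.
apply/matrixP => a j; rewrite !mxE summxE; apply: eq_bigr => r _.
by rewrite !mxE big_ord1 !mxE.
Qed.

Lemma mx_eq_rows (F : fieldType) k l (M1 M2 : 'M[F]_(k, l)) :
  (forall a : 'rV_k, a *m M1 = a *m M2) -> M1 = M2.
Proof. by move=> h; apply/row_matrixP => r; rewrite !rowE h. Qed.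

Section CDGA.
Variable F : fieldType.
Variable A : cdga F.
Local Notation n := (cdim A).

Definition cdL : {linear 'rV[F]_n -> 'rV[F]_n} :=
  HB.pack (cd A) (GRing.isLinear.Build _ _ _ _ _ (@cd_lin F A)).

Lemma cmulr_lin b : linear (cmul A b).
Proof. by move=> c x y; rewrite cmul_linr. Qed.

Definition cmulL b : {linear 'rV[F]_n -> 'rV[F]_n} :=
  HB.pack (cmul A b) (GRing.isLinear.Build _ _ _ _ _ (cmulr_lin b)).

Definition Dm := lin1_mx cdL.
Definition Em b := lin1_mx (cmulL b).

Lemma cdE a : cd A a = a *m Dm.
Proof. by rewrite /Dm mul_rV_lin1. Qed.

Lemma cmulE b a : cmul A b a = a *m Em b.
Proof. by rewrite /Em mul_rV_lin1. Qed.

Lemma cd0 : cd A 0 = 0.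
Proof. by rewrite cdE mul0mx. Qed.

Lemma cmul0l a : cmul A 0 a = 0.
Proof.
have := @cmul_linl F A 1 0 0 a; rewrite !scale1r addr0 => h.
by rewrite -[LHS](addrK (cmul A 0 a)) -h subrr.
Qed.

Lemma EmZ c b : Em (c *: b) = c *: Em b.
Proof.
apply: mx_eq_rows => a; rewrite -cmulE -scalemxAr -cmulE.
by rewrite -[c *: b]addr0 cmul_linl cmul0l addr0.
Qed.

Lemma DmD : Dm *m Dm = 0.
Proof. by apply: mx_eq_rows => a; rewrite mulmxA -!cdE cdd mulmx0. Qed.

Lemma homog_delta r : homog (cdeg A) (cdeg A r) (ebas F r).
Proof.
move=> j hj; rewrite /ebas mxE eqxx /=; case: (j =P r) => [ej|//].
by case: hj; rewrite ej.
Qed.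

Lemma QDP i : Qdeg A i *m Dm *m Pdeg A i = Qdeg A i *m Dm.
Proof.
apply/matrixP => r j; rewrite mul_mx_diag mul_diag_mx !mxE.
case: (cdeg A j =P i) => [_ | ne]; first by rewrite mulr1.
rewrite mulr0.
case: ((cdeg A r).+1 =P i) => [er | nr]; last by rewrite mul0r.
have := cd_homog (@homog_delta r) (j:=j); rewrite er => /(_ ne) ->; rewrite mulr0 //.
Qed.

Section Eta.
Variable eta : 'rV[F]_n.
Hypothesis eta1 : homog (cdeg A) 1 eta.
Hypothesis deta : cd A eta = 0.
Hypothesis two : (2%:R : F) != 0.

Lemma eta2 : cmul A eta eta = 0.
Proof.
have := cmulC eta1 eta1; rewrite expr1 scaleN1r => /eqP.
rewrite -subr_eq0 opprK -mulr2n -scaler_nat scaler_eq0 (negbTE two) /= => /eqP //.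
Qed.

Lemma EmE : Em eta *m Em eta = 0.
Proof.
by apply: mx_eq_rows => a; rewrite mulmxA -!cmulE cmulA eta2 cmul0l mulmx0.
Qed.

Lemma EmD : Em eta *m Dm = - (Dm *m Em eta).
Proof.
apply: mx_eq_rows => a; rewrite mulmxN !mulmxA -cmulE -!cdE -cmulE.
by rewrite (cd_leibniz _ eta1) deta cmul0l add0r expr1 scaleN1r.
Qed.

Lemma QEP i : Qdeg A i *m Em eta *m Pdeg A i = Qdeg A i *m Em eta.
Proof.
apply/matrixP => r j; rewrite mul_mx_diag mul_diag_mx !mxE.
case: (cdeg A j =P i) => [_ | ne]; first by rewrite mulr1.
rewrite mulr0.
case: ((cdeg A r).+1 =P i) => [er | nr]; last by rewrite mul0r.
have := cmul_homog eta1 (@homog_delta r) (j:=j); rewrite add1n er => /(_ ne) ->; rewrite mulr0 //.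
Qed.
End Eta.

Lemma dtwE p m (T : 'I_m -> 'M[F]_p) (W : 'M[F]_(m, n)) X :
  dtw A T W X = X *m Dm + \sum_(k < m) (T k *m X) *m Em (row k W).
Proof.
rewrite /dtw big_split /=; congr (_ + _).
  by rewrite (mul_sum_colrow X Dm); apply: eq_bigr => r _; rewrite rowE -cdE.
rewrite exchange_big /=; apply: eq_bigr => k _.
rewrite (mul_sum_colrow (T k *m X)); apply: eq_bigr => r _.
by rewrite [row r (Em _)]rowE -cmulE /ebas !colE mulmxA.
Qed.

End CDGA.


Lemma left_inv_cV (F : fieldType) p (v : 'cV[F]_p) : v != 0 ->
  exists psi : 'rV[F]_p, psi *m v = 1%:M.
Proof.
move=> nv.
have /existsP [a va] : [exists a, v a 0 != 0].
  apply: contraNT nv => /existsPn h; apply/eqP/matrixP => a j.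
  by rewrite ord1 mxE; apply/eqP; move: (h a); rewrite negbK.
exists ((v a 0)^-1 *: delta_mx 0 a); rewrite -scalemxAl -rowE.
apply/matrixP => i j; rewrite !ord1 !mxE eqxx /= mulr1n mulVf //.
Qed.

Lemma row0id (F : fieldType) n (b : 'M[F]_(1, n)) : row 0 b = b.
Proof. by apply/matrixP => i j; rewrite ord1 mxE. Qed.

Lemma scalar0 (F : fieldType) p : (0%:M : 'M[F]_p) = 0.
Proof. by apply/matrixP => a b; rewrite !mxE mul0rn. Qed.

Section Main.
Variable F : fieldType.
Variable A : cdga F.
Local Notation n := (cdim A).

Lemma dtw_rank1 b (X : 'M[F]_(1, n)) :
  dtw A (fun _ : 'I_1 => (1%R : 'M[F]_1)) b X = X *m @Dm F A + X *m @Em F A b.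
Proof. by rewrite dtwE big_ord1 mul1mx row0id. Qed.

Lemma homogZ k c (a : 'rV[F]_n) : homog (cdeg A) k a -> homog (cdeg A) k (c *: a).
Proof. by move=> h j hj; rewrite mxE h // mulr0. Qed.

Lemma rowW (g : lie_alg F) (eta : 'rV[F]_n) (x : 'rV[F]_(ldim g)) k :
  row k (@tensAg F A _ eta x) = x 0 k *: eta.
Proof.
rewrite /tensAg row_mul; apply/matrixP => i j; rewrite ord1 !mxE big_ord1 !mxE.
by [].
Qed.

Lemma rmap_lin0 (g : lie_alg F) (th : lie_rep g) : linear (rmap th).
Proof. by move=> c x y; rewrite rmap_lin. Qed.

Definition rmapL (g : lie_alg F) (th : lie_rep g) :
  {linear 'rV[F]_(ldim g) -> 'M[F]_(rdim th)} :=
  HB.pack (rmap th) (GRing.isLinear.Build _ _ _ _ _ (rmap_lin0 th)).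

Lemma rmap_sum (g : lie_alg F) (th : lie_rep g) (x : 'rV[F]_(ldim g)) :
  \sum_k x 0 k *: theta_mats th k = rmap th x.
Proof.
rewrite {2}[x]row_sum_delta.
have -> : rmap th (\sum_(j < ldim g) x 0 j *: delta_mx 0 j) =
  rmapL th (\sum_(j < ldim g) x 0 j *: delta_mx 0 j) by [].
by rewrite linear_sum; apply: eq_bigr => k _; rewrite linearZ.
Qed.

Lemma dtw_W (g : lie_alg F) (th : lie_rep g) (eta : 'rV[F]_n) (x : 'rV[F]_(ldim g)) X :
  dtw A (theta_mats th) (@tensAg F A _ eta x) X = Lop (@Dm F A) (@Em F A eta) (rmap th x) X.
Proof.
rewrite dtwE /Lop -rmap_sum; congr (_ + _).
rewrite mulmx_suml mulmx_suml; apply: eq_bigr => k _.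
by rewrite rowW EmZ -scalemxAr -!scalemxAl.
Qed.

End Main.

Section Dir1.
Variable F : fieldType.
Variable A : cdga F.
Local Notation n := (cdim A).
Hypothesis two : (2%:R : F) != 0.

Lemma flat_W (g : lie_alg F) (eta : 'rV[F]_n) (x : 'rV[F]_(ldim g)) :
  homog (cdeg A) 1 eta -> cd A eta = 0 -> flat A (@tensAg F A _ eta x).
Proof.
move=> h1 hd; split.
  by move=> k; rewrite rowW; apply: homogZ.
rewrite big1 ?add0r; last first.
  move=> k _; rewrite rowW.
  have -> : cd A (x 0 k *: eta) = cdL A (x 0 k *: eta) by [].
  by rewrite linearZ /= hd scaler0 /tensAg mulmx0.
rewrite big1 // => k _; rewrite big1 // => l _.
rewrite !rowW.
have -> : cmul A (x 0 k *: eta) (x 0 l *: eta) = 0.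
  rewrite -[x 0 k *: eta]addr0 cmul_linl cmul0l addr0.
  rewrite -[x 0 l *: eta]addr0 cmul_linr.
  have c0 : cmul A eta 0 = 0.
    have := @cmul_linr F A 1 eta 0 0; rewrite !scale1r addr0 => h.
    by rewrite -[LHS](addrK (cmul A eta 0)) -h subrr.
  by rewrite c0 (eta2 h1 two) !scaler0 addr0 scaler0.
by rewrite /tensAg mulmx0.
Qed.

End Dir1.

Section Dir1b.
Variable F : fieldType.
Variable A : cdga F.
Local Notation n := (cdim A).
Hypothesis two : (2%:R : F) != 0.

Lemma Em0 : @Em F A 0 = 0.
Proof. by apply: mx_eq_rows => a; rewrite -cmulE cmul0l mulmx0. Qed.

Lemma Pi_res (g : lie_alg F) (th : lie_rep g) i (eta : 'rV[F]_n) (x : 'rV[F]_(ldim g)) :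
  resonance1 A i 1 0 -> homog (cdeg A) 1 eta -> cd A eta = 0 ->
  \det (rmap th x) = 0 -> (1 <= Hdim A (theta_mats th) (@tensAg F A _ eta x) i)%N.
Proof.
move=> [_ [_ hH]] h1 hd hdet.
set D := @Dm F A; set E := @Em F A eta; set M := rmap th x.
set P := Pdeg A i; set Q := Qdeg A i.
have DD : D *m D = 0 by apply: DmD.
have EE : E *m E = 0 by apply: EmE.
have ED : E *m D = - (D *m E) by apply: EmD.
have hQDP : Q *m D *m P = Q *m D by apply: QDP.
have hQEP : Q *m E *m P = Q *m E by apply: QEP.
have Lop0 : forall y : 'M[F]_(1, n), Lop D E (0 : 'M[F]_1) y = y *m D.
  by move=> y; rewrite /Lop !mul0mx addr0.
have hL0 : forall X, dtw A (fun _ : 'I_1 => (1%R : 'M[F]_1)) 0 X = Lop D E (0 : 'M[F]_1) X.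
  by move=> X; rewrite dtw_rank1 Em0 mulmx0 addr0 Lop0.
have nex : ~ exactp D E P Q (0 : 'M[F]_1).
  by move=> ex; move: hH; rewrite (Hdim_eq0 hL0 ex).
have [z hz0] := not_all_ex_not _ _ nex.
have [zP hz1] := imply_to_and _ _ hz0.
have [Lz nz] := imply_to_and _ _ hz1.
rewrite Lop0 in Lz.
have hL := @dtw_W F A g th eta x.
have /det0P [v' nv' hv'] : \det M^T == 0 by rewrite det_tr hdet.
set v := v'^T.
have Mv : M *m v = 0 by rewrite /v -[M]trmxK -trmx_mul hv' trmx0.
have nv : v != 0 by rewrite /v trmx_eq0.
have /det0P [phi nphi hphi] : \det M == 0 by rewrite hdet.
have [psi hpsi] := left_inv_cV nv.
have nphiT : phi^T != 0 by rewrite trmx_eq0.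
have [psi' hpsi'] := left_inv_cV nphiT.
set e := psi'^T.
have he : phi *m e = 1%:M by rewrite /e -[phi]trmxK -trmx_mul hpsi' tr_scalar_mx.
have [[Y [YQ hY]] | nY] := classic (exists Y, Y *m Q = Y /\ v *m z = Lop D E M Y); last first.
  apply: (Hdim_pos hL DD EE ED hQDP hQEP (X := v *m z)).
  - by rewrite -mulmxA zP.
  - by rewrite /Lop -(mulmxA v z D) Lz mulmx0 add0r (mulmxA M v z) Mv !mul0mx.
  - exact: nY.
set w := psi *m Y.
have wQ : w *m Q = w by rewrite /w -mulmxA YQ.
have hz : z = w *m D + (psi *m M *m Y) *m E.
  by rewrite -[z]mul1mx -hpsi -mulmxA hY /Lop mulmxDr /w !mulmxA.
have zE : z *m E = w *m D *m E.
  by rewrite {1}hz mulmxDl -(mulmxA _ E E) EE mulmx0 addr0.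
have wEP : w *m E *m P = w *m E.
  by rewrite -wQ -!mulmxA (mulmxA Q E P) hQEP.
pose X2 := e *m z + (M *m e) *m (w *m E).
apply: (Hdim_pos hL DD EE ED hQDP hQEP (X := X2)).
- by rewrite /X2 mulmxDl -(mulmxA e z P) zP -(mulmxA (M *m e)) wEP.
- rewrite /Lop /X2 mulmxDl mulmxDr mulmxDl.
  rewrite -(mulmxA e z D) Lz mulmx0 add0r.
  rewrite -(mulmxA (M *m e) (w *m E) D) -(mulmxA w E D) ED.
  have -> : M *m (M *m e *m (w *m E)) *m E = 0.
    by rewrite -!mulmxA EE !mulmx0.
  rewrite addr0.
  have -> : M *m (e *m z) *m E = (M *m e) *m (z *m E) by rewrite !mulmxA.
  by rewrite zE mulmxN mulmxN -(mulmxA w D E) addNr.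
- move=> [Y2 [Y2Q hY2]]; apply: nz; exists (phi *m Y2); split.
    by rewrite -mulmxA Y2Q.
  have := congr1 (mulmx phi) hY2.
  rewrite /X2 mulmxDr !mulmxA he mul1mx hphi !mul0mx addr0 => ->.
  by rewrite Lop0 /Lop mulmxDr !mulmxA hphi !mul0mx addr0.
Qed.

End Dir1b.

Lemma term_le_sum (C : numDomainType) (I : finType) (f : I -> C) a :
  (forall b, 0 <= f b) -> f a <= \sum_b f b.
Proof.
move=> h; rewrite (bigD1 a) //= lerDl; apply: sumr_ge0 => b _; exact: h.
Qed.

Lemma eig_bound (C : numFieldType) p (M : 'M[C]_p) mu :
  \det (M - mu%:M) = 0 -> `|mu| <= \sum_a \sum_b `|M a b|.
Proof.
move/eqP/det0P => [v nv hv].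
have vM : v *m M = mu *: v by apply/eqP; rewrite -subr_eq0 -mul_mx_scalar -mulmxBr hv.
pose S := \sum_b `|v 0 b|.
have S0 : 0 <= S by apply: sumr_ge0 => b _.
have Spos : 0 < S.
  rewrite lt0r S0 andbT; apply: contraNN nv => /eqP hS.
  apply/eqP/matrixP => i j; rewrite ord1 mxE.
  by apply/eqP; rewrite -normr_eq0; apply/eqP; apply: (psumr_eq0P _ hS) => // b _.
have hb : forall b, mu * v 0 b = \sum_a v 0 a * M a b.
  by move=> b; have := congr1 (fun X : 'rV[C]_p => X 0 b) vM; rewrite /= !mxE => <-.
rewrite -(ler_pM2l Spos).
have -> : S * `|mu| = \sum_b `|mu * v 0 b|.
  by rewrite mulrC /S mulr_sumr; apply: eq_bigr => b _; rewrite normrM.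
rewrite exchange_big /= mulr_sumr; apply: ler_sum => b _.
rewrite hb mulr_sumr; apply: (le_trans (ler_norm_sum _ _ _)); apply: ler_sum => a _.
rewrite normrM; apply: ler_wpM2r => //.
exact: term_le_sum.
Qed.


Theorem theorem2p4 (R : realType) (A : cdga R[i]) (i : nat) :
  connected A ->
  (* trivial resonance in degree i: 0 is an isolated point of R^i_1(A) *)
  resonance1 A i 1 0 ->
  (exists eps : R[i], 0 < eps /\
     forall eta : 'rV[R[i]]_(cdim A), resonance1 A i 1 eta ->
       (forall j, `|eta 0 j| < eps) -> eta = 0) ->
  forall (g : lie_alg R[i]) (th : lie_rep g), (0 < rdim th)%N ->
  (* Pi(A,theta) and R^i_1(A,theta) \cap F^1(A,g) have the same germ at 0 *)
  exists eps : R[i], 0 < eps /\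
    forall W : 'M[R[i]]_(ldim g, cdim A),
      (forall k j, `|W k j| < eps) ->
      (Pi A th W <-> resonance A th i 1 W /\ F1 A W).
Proof.
move=> _ h0 [eps0 [eps0P hiso]] g th hp.
have two : (2%:R : R[i]) != 0 by rewrite pnatr_eq0.
pose T := theta_mats th.
pose Tn := \sum_a \sum_b \sum_k `|T k a b|.
have Tn0 : 0 <= Tn by do 3! (apply: sumr_ge0 => ? _).
have K0 : 0 < Tn + 1 by apply: ltr_wpDl.
exists (eps0 / (Tn + 1)); split; first by apply: divr_gt0.
move=> W Wsmall; split.
  move=> [eta [x [h1 [hd [hdet ->]]]]]; split; last by exists eta, x.
  split; first exact: flat_W.
  exact: Pi_res.
move=> [[_ hH] [eta [x [h1 [hd eW]]]]].
have [hdet|hdet] := eqVneq (\det (rmap th x)) 0.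
  by exists eta, x.
have [heta|heta] := eqVneq eta 0.
  exists 0, 0; split; first by move=> j _; rewrite mxE.
  split; first by rewrite /cdL; have -> : cd A 0 = cdL A 0 by []; rewrite linear0.
  split.
    have -> : rmap th 0 = rmapL th 0 by [].
    rewrite linear0 -scalar0 det_scalar expr0n /=.
    by move: hp; case: (rdim th).
  by rewrite eW heta /tensAg !mulmx0.
exfalso.
set eps := eps0 / (Tn + 1).
have epsP : 0 < eps by apply: divr_gt0.
set D := @Dm _ A; set E := @Em _ A eta; set M := rmap th x.
set P := Pdeg A i; set Q := Qdeg A i.
have DD : D *m D = 0 by apply: DmD.
have EE : E *m E = 0 by apply: EmE.
have ED : E *m D = - (D *m E) by apply: EmD.
have hQDP : Q *m D *m P = Q *m D by apply: QDP.
have hQEP : Q *m E *m P = Q *m E by apply: QEP.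
have hL := @dtw_W _ A g th eta x.
rewrite eW in hH.
suff ex : exactp D E P Q M by move: hH; rewrite (Hdim_eq0 hL ex).
have [U Uu Utrig] := Schur M hp.
have Uunit := unitarymx_unit Uu.
have Utrig2 : is_trig_mx (U *m M *m invmx U) by move: Utrig; rewrite /similar_to /conjmx; rewrite (pinvmxE Uunit).
apply: (exact_conj Uunit); apply: exact_trig => // mu hmu.
have hmuM : \det (M - mu%:M) = 0.
  have e : U *m M *m invmx U - mu%:M = U *m (M - mu%:M) *m invmx U.
    by rewrite mulmxBr mulmxBl scalar_mxC -(mulmxA _ U) (mulmxV Uunit) mulmx1.
  move: hmu; rewrite e !det_mulmx det_inv => /eqP; rewrite !mulf_eq0 invr_eq0.
  have dU : \det U != 0 by rewrite -unitfE -unitmxE.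
  by rewrite (negbTE dU) /= orbF => /eqP.
have mu0 : mu != 0.
  apply: contra_neq hdet => emu; move: hmuM; rewrite emu scalar0 subr0 //.
have hL1 : forall X, dtw A (fun _ : 'I_1 => (1%R : 'M_1)) (mu *: eta) X = Lop D E (mu%:M) X.
  by move=> X; rewrite dtw_rank1 EmZ /Lop -scalemxAr mul_scalar_mx -scalemxAl.
apply: (Hdim_exact hL1 DD EE ED hQDP hQEP).
apply/eqP; rewrite -leqn0 leqNgt; apply/negP => hpos.
have : mu *: eta = 0.
  apply: hiso.
    split; first exact: homogZ.
    split; last exact: hpos.
    by have -> : cd A (mu *: eta) = cdL A (mu *: eta) by []; rewrite linearZ /= hd scaler0.
  move=> j; rewrite mxE normrM.
  have hmub := eig_bound hmuM.
  have hM : forall a b, `|M a b| <= \sum_k `|x 0 k| * `|T k a b|.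
    move=> a b; rewrite /M -rmap_sum summxE.
    apply: (le_trans (ler_norm_sum _ _ _)); apply: ler_sum => k _.
    by rewrite mxE normrM.
  have Wkj : forall k, `|x 0 k| * `|eta 0 j| = `|W k j|.
    by move=> k; rewrite eW /tensAg !mxE big_ord1 !mxE normrM.
  apply: (le_lt_trans (y := eps * Tn)).
    apply: (le_trans (ler_wpM2r (normr_ge0 _) hmub)).
    rewrite /Tn mulr_sumr mulr_suml; apply: ler_sum => a _.
    rewrite mulr_sumr mulr_suml; apply: ler_sum => b _.
    apply: (le_trans (ler_wpM2r (normr_ge0 _) (hM a b))).
    rewrite mulr_sumr mulr_suml; apply: ler_sum => k _.
    rewrite mulrAC Wkj; apply: ler_wpM2r => //; exact: ltW.
  have -> : eps0 = eps * (Tn + 1) by rewrite /eps divfK // gt_eqF.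
  by rewrite ltr_pM2l // ltrDl ltr01.
by move/eqP; rewrite scaler_eq0 (negbTE mu0) (negbTE heta).
Qed.
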